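(* Let $I$ and $J$ be big intervals. The following are equivalent: (1) there is an order-preserving injection $f:I\to J$; (2) there is a (topologically) dense subset $A\subset I$ and an order-preserving injection $h:A\to J$; (3) there is an order-preserving surjection $g:J\to I$.
   Context: A big interval is a totally ordered set, endowed with the order topology, which is compact and connected; equivalently, a totally ordered set which is order complete (every nonempty subset has a supremum), dense (between any two distinct elements there is a third), and has a minimal element $0_I$ and a maximal element $1_I$. A map between totally ordered sets is order-preserving if $s\le t$ implies $f(s)\le f(t)$. *)

(* Defs.v *)
From HB Require Import structures.
From mathcomp Require Import all_boot all_order.
Set Implicit Arguments. Unset Strict Implicit. Unset Printing Implicit Defensive.
Import Order.TTheory.
Local Open Scope order_scope.

Section BigInterval.
Context {d : Order.disp_t} (T : orderType d).

Definition is_sup (S : T -> Prop) (s : T) : Prop :=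
  (forall x, S x -> x <= s) /\
  (forall u, (forall x, S x -> x <= u) -> s <= u).

Definition order_complete : Prop :=
  forall S : T -> Prop, (exists x, S x) -> exists s, is_sup S s.

Definition order_dense : Prop :=
  forall x y : T, x < y -> exists z, x < z /\ z < y.

Definition big_interval : Prop :=
  [/\ order_complete, order_dense,
      exists m : T, forall x, m <= x
    & exists M : T, forall x, x <= M].

Definition basic_open (B : T -> Prop) : Prop :=
  (exists a b : T, forall x, B x <-> (a < x /\ x < b)) \/
  (exists b : T, forall x, B x <-> x < b) \/
  (exists a : T, forall x, B x <-> a < x) \/
  (forall x, B x).

Definition order_open (U : T -> Prop) : Prop :=
  forall x, U x -> exists B, basic_open B /\ B x /\ (forall y, B y -> U y).

Definition top_dense (A : T -> Prop) : Prop :=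
  forall U, order_open U -> (exists x, U x) -> exists x, U x /\ A x.

End BigInterval.

Definition order_preserving {d1 d2 : Order.disp_t}
  {S : porderType d1} {T : porderType d2} (f : S -> T) : Prop :=
  forall s t : S, s <= t -> f s <= f t.

Definition surjective {A B : Type} (f : A -> B) : Prop := forall b, exists a, f a = b.

(* Main.v *)
Require Import Defs.
From HB Require Import structures.
From mathcomp Require Import all_boot all_order.
From Stdlib Require Import ClassicalEpsilon ProofIrrelevance.
Import Order.TTheory.
Local Open Scope order_scope.

Lemma fun_choice {A B : Type} (R : A -> B -> Prop) :
  (forall a, exists b, R a b) -> exists f : A -> B, forall a, R a (f a).
Proof.
move=> H; exists (fun a => proj1_sig (constructive_indefinite_description _ (H a))).
by move=> a; exact: (proj2_sig (constructive_indefinite_description _ (H a))).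
Qed.

Section S.
Context {d1 d2 : Order.disp_t} {I : orderType d1} {J : orderType d2}.

Lemma strict_of_inj (f : I -> J) : order_preserving f -> injective f ->
  forall x y, x < y -> f x < f y.
Proof.
move=> mf inf x y lxy; rewrite lt_neqAle mf ?ltW // andbT.
apply/negP => /eqP e; have exy := inf _ _ e; by rewrite exy ltxx in lxy.
Qed.

Lemma inj_of_strict (f : I -> J) : (forall x y, x < y -> f x < f y) -> injective f.
Proof.
move=> sf x y e; case: (ltgtP x y) => [h|h|//]; have := sf _ _ h; by rewrite e ltxx.
Qed.

Lemma refl_lt (g : J -> I) : order_preserving g -> forall a b, g a < g b -> a < b.
Proof.
move=> mg a b h; rewrite ltNge; apply/negP => ba; have := mg _ _ ba.
by rewrite leNgt h.
Qed.

Lemma between (A : I -> Prop) : order_dense I -> top_dense A ->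
  forall x y, x < y -> exists a, A a /\ x < a /\ a < y.
Proof.
move=> dI tA x y lxy.
have [a [Ua Aa]] : exists a, (x < a /\ a < y) /\ A a.
  apply: tA.
    move=> z Uz; exists (fun w => x < w /\ w < y); split; last by [].
    by left; exists x, y.
  exact: dI.
by exists a.
Qed.

End S.

Theorem mainTheorem1 (d1 d2 : Order.disp_t) (I : orderType d1) (J : orderType d2) :
  big_interval I -> big_interval J ->
  ((exists f : I -> J, order_preserving f /\ injective f) <->
   (exists A : I -> Prop, top_dense A /\
      exists h : {x : I | A x} -> J,
        (forall s t : {x : I | A x}, proj1_sig s <= proj1_sig t -> h s <= h t)
        /\ injective h)) /\
  ((exists f : I -> J, order_preserving f /\ injective f) <->
   (exists g : J -> I, order_preserving g /\ surjective g)).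
Proof.
move=> [cI dI [mI hmI] [MI hMI]] [cJ dJ [mJ hmJ] [MJ hMJ]].
split; split.
- move=> [f [mf inf]]; exists (fun _ => True); split.
    by move=> U _ [x Ux]; exists x.
  exists (fun s => f (proj1_sig s)); split.
    by move=> s t st; apply: mf.
  move=> [s ps] [t pt] /= e; have est := inf _ _ e; subst t.
  by rewrite (proof_irrelevance _ ps pt).
- move=> [A [tA [h [mh inh]]]].
  have [f hf] : exists f : I -> J, forall x, is_sup (fun y => y = mJ \/
      exists a : {x | A x}, proj1_sig a <= x /\ h a = y) (f x).
    apply: (fun_choice (fun x s => is_sup (fun y => y = mJ \/
      exists a : {x | A x}, proj1_sig a <= x /\ h a = y) s)) => x.
    by apply: cJ; exists mJ; left.
  exists f; split.
    move=> x y xy; apply: (proj2 (hf x)) => z [->|[a [ax <-]]].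
      by apply: (proj1 (hf y)); left.
    by apply: (proj1 (hf y)); right; exists a; split => //; apply: le_trans xy.
  apply: inj_of_strict => x y xy.
  have [a [Aa [xa ay]]] := between _ dI tA _ _ xy.
  have [b [Ab [ab dy]]] := between _ dI tA _ _ ay.
  pose a' := exist A a Aa; pose b' := exist A b Ab.
  have fxa : f x <= h a'.
    apply: (proj2 (hf x)) => z [->|[c [cx <-]]]; first exact: hmJ.
    by apply: mh => /=; apply: le_trans cx (ltW xa).
  have hab : h a' < h b'.
    rewrite lt_neqAle mh /= ?(ltW ab) // andbT.
    apply/negP => /eqP e; have := inh _ _ e => /(f_equal (@proj1_sig _ _)) /= eab.
    by rewrite eab ltxx in ab.
  have hbf : h b' <= f y.
    by apply: (proj1 (hf y)); right; exists b'; split => //=; apply: ltW.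
  by apply: le_lt_trans fxa (lt_le_trans hab hbf).
- move=> [f [mf inf]].
  have sf := strict_of_inj _ mf inf.
  have [g hg] : exists g : J -> I, forall y, is_sup (fun x => x = mI \/ f x <= y) (g y).
    apply: (fun_choice (fun y s => is_sup (fun x => x = mI \/ f x <= y) s)) => y.
    by apply: cI; exists mI; left.
  exists g; split.
    move=> y y' yy; apply: (proj2 (hg y)) => z [->|fz].
      by apply: (proj1 (hg y')); left.
    by apply: (proj1 (hg y')); right; apply: le_trans yy.
  move=> b; exists (f b); apply/eqP; rewrite eq_le; apply/andP; split.
    apply: (proj2 (hg (f b))) => z [->|fz]; first exact: hmI.
    rewrite leNgt; apply/negP => bz; have := sf _ _ bz; by rewrite ltNge fz.
  by apply: (proj1 (hg (f b))); right.
- move=> [g [mg sg]].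
  have [f hf] : exists f : I -> J, forall x, is_sup (fun y => g y = x) (f x).
    apply: (fun_choice (fun x s => is_sup (fun y => g y = x) s)) => x.
    by apply: cJ; have [y hy] := sg x; exists y.
  have sf : forall x x', x < x' -> f x < f x'.
    move=> x x' xx'.
    have [x1 [h1 h1']] := dI _ _ xx'.
    have [x2 [h2 h2']] := dI _ _ h1'.
    have [y1 e1] := sg x1; have [y2 e2] := sg x2; have [y' e'] := sg x'.
    have l1 : f x <= y1.
      apply: (proj2 (hf x)) => y gy; apply: ltW; apply: (refl_lt _ mg).
      by rewrite gy e1.
    have l2 : y1 < y2 by apply: (refl_lt _ mg); rewrite e1 e2.
    have l3 : y2 <= f x'.
      apply: le_trans (proj1 (hf x') _ e'); apply: ltW; apply: (refl_lt _ mg).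
      by rewrite e2 e'.
    exact: le_lt_trans l1 (lt_le_trans l2 l3).
  exists f; split; last exact: inj_of_strict _ sf.
  move=> x x'; rewrite le_eqVlt => /orP[/eqP->//|h]; exact: ltW (sf _ _ h).
Qed.
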